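(* Let $R$ be a Noetherian ring and $I\subset R$ an ideal. If $I^n\cap(0:I)=0$ for some $n\in\mathbb N$, then $I^n(0:I^\infty)=0$.
   Context: $0:I^\infty=\bigcup_{t\ge1}(0:I^t)$. *)

(* Defs.v *)
From mathcomp Require Import all_boot all_algebra.
Set Implicit Arguments. Unset Strict Implicit. Unset Printing Implicit Defensive.
Import GRing.Theory.
Local Open Scope ring_scope.

Section IdealDefs.
Variable R : comNzRingType.

Definition is_ideal (I : R -> Prop) : Prop :=
  [/\ I 0, (forall x y, I x -> I y -> I (x + y)) & (forall r x, I x -> I (r * x))].

Definition noetherian_ring : Prop :=
  forall f : nat -> R -> Prop,
    (forall k, is_ideal (f k)) ->
    (forall k x, f k x -> f k.+1 x) ->
    exists m, forall k, (m <= k)%N -> forall x, f k x -> f m x.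

Definition ideal_mul (I J : R -> Prop) : R -> Prop :=
  fun x => exists s : seq (R * R),
    (forall p, p \in s -> I p.1 /\ J p.2) /\ x = \sum_(p <- s) p.1 * p.2.

Fixpoint ideal_pow (I : R -> Prop) (n : nat) : R -> Prop :=
  match n with
  | 0%N => fun _ => True
  | n'.+1 => ideal_mul (ideal_pow I n') I
  end.

Definition ann (I : R -> Prop) : R -> Prop :=
  fun x => forall a, I a -> x * a = 0.

Definition ann_inf (I : R -> Prop) : R -> Prop :=
  fun x => exists t, (1 <= t)%N /\ ann (ideal_pow I t) x.

End IdealDefs.

(* Main.v *)
Require Import Defs.
From mathcomp Require Import all_boot all_algebra.
Local Open Scope ring_scope.
Import GRing.Theory.

Lemma pow_mull (R : comNzRingType) (I : R -> Prop) (n : nat) r x :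
  is_ideal I -> ideal_pow I n x -> ideal_pow I n (r * x).
Proof.
case=> _ _ HI; case: n => [//|n] /= [s [Hs ->]].
exists [seq (p.1, r * p.2) | p <- s]; split.
  move=> p /mapP [q Hq ->] /=; have [h1 h2] := Hs q Hq; split=> //; exact: HI.
rewrite big_map mulr_sumr; apply: eq_bigr => p _ /=.
by rewrite mulrCA.
Qed.

Lemma pow_mulS (R : comNzRingType) (I : R -> Prop) (s : nat) b c :
  ideal_pow I s b -> I c -> ideal_pow I s.+1 (b * c).
Proof.
move=> Hb Hc; exists [:: (b, c)]; split.
  by move=> p; rewrite inE => /eqP ->.
by rewrite big_seq1.
Qed.

Lemma main_aux (R : comNzRingType) (I : R -> Prop) (n : nat) :
  is_ideal I ->
  (forall x, ideal_pow I n x -> ann I x -> x = 0) ->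
  forall s x, ideal_pow I n x -> ann (ideal_pow I s) x -> x = 0.
Proof.
move=> HI H0; elim=> [|s IH] x Hx Ha.
  by rewrite -[x]mulr1; apply: Ha.
apply: (IH x Hx) => b Hb.
apply: H0; first by rewrite mulrC; apply: pow_mull.
move=> c Hc; rewrite -mulrA; apply: Ha; exact: pow_mulS.
Qed.

Theorem lemma3p6 (R : comNzRingType) (I : R -> Prop) (n : nat) :
  noetherian_ring R -> is_ideal I ->
  (forall x, ideal_pow I n x -> ann I x -> x = 0) ->
  forall x, ideal_mul (ideal_pow I n) (ann_inf I) x -> x = 0.
Proof.
move=> _ HI H0 x [s [Hs ->]].
rewrite big_seq big1 // => p Hp.
have [h1 [t [_ h2]]] := Hs p Hp.
apply: (@main_aux R I n HI H0 t).
  by rewrite mulrC; apply: pow_mull.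
by move=> a Ha; rewrite -mulrA (h2 a Ha) mulr0.
Qed.
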